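(* Let $(\mathcal{N},r)$ be a ranked $X$-cactus. Then $\mathcal{S}_i(\mathcal{N})\prec\mathcal{S}_j(\mathcal{N})$ for all $0\le i<j\le\sigma(r)$, and $\mathcal{S}_{\sigma(r)}(\mathcal{N})=\{(X,\emptyset)\}$.
   Context: Let $X$ be a finite non-empty set. A rooted DAG $N=(V,A)$ is a finite directed acyclic graph with a vertex $\rho$ of indegree $0$ (the root) from which every vertex is reachable. Leaf: outdegree $0$; tree vertex: indegree $\le1$; reticulation vertex: indegree $\ge 2$; if $(u,v)\in A$, $u$ is a parent of $v$ and $v$ a child of $u$. A reticulation cycle consists of two distinct directed paths with the same start and end vertex and no other common vertices. A rooted $X$-cactus $\mathcal{N}=(N,\varphi)$ is a rooted DAG with $\varphi:X\to V$ such that every vertex has indegree $\le2$, no two distinct reticulation cycles share an arc, and $\varphi(X)$ contains all leaves and all tree vertices of outdegree $1$. A time-stamp function is $t:V\to\mathbb{R}_{\ge0}$ with $t(v)=0$ for $v\in\varphi(X)$; $t(u)>t(v)$ for every arc $(u,v)$ with $v$ not a reticulation vertex; $t(v)=t(p_1)=t(p_2)$ for each reticulation vertex $v$ with parents $p_1,p_2$. $\mathcal{N}$ is temporal if one exists; its size is $\sigma(t)=|t(V)|-1$. A ranking is a time-stamp function $r$ with $r(V)=\{0,\dots,\sigma(r)\}$; a ranked $X$-cactus is a rooted temporal $X$-cactus with a ranking. A vertex $u$ is a descendant of $v$ if some directed path from the root to $u$ contains $v$; strict if every such path contains $v$, non-strict otherwise. $S(u)=\{x:\varphi(x)$ strict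 descendant of $u\}$, $H(u)=\{x:\varphi(x)$ non-strict descendant of $u\}$. For $0\le i\le\sigma(r)$, $V_i=\{u\in V: r(u)\le i$ and $r(p)>i$ for all parents $p$ of $u\}$ and $\mathcal{S}_i(\mathcal{N})=\{(S(u),H(u)):u\in V_i\}\cup\{(H(u),\emptyset):u\in V_i, H(u)\ne\emptyset\}$. A set pair system on $X$ is a set of ordered pairs $(S,H)$ of subsets of $X$ with $S\ne\emptyset$ and $S\cap H=\emptyset$. On set pairs, $(S_1,H_1)\le(S_2,H_2)$ iff they are equal or one of: $S_1\cup H_1\subseteq S_2$; $S_1\cup H_1\subseteq H_2$; $S_1\subsetneq S_2$ and $H_1=H_2\ne\emptyset$. For set pair systems, $\mathcal{S}_1\preceq\mathcal{S}_2$ iff (SP1) for every $(S_1,H_1)\in\mathcal{S}_1$ there is $(S_2,H_2)\in\mathcal{S}_2$ with $(S_1,H_1)\le(S_2,H_2)$, and (SP2) for every $(S_2,H_2)\in\mathcal{S}_2$ with $H_2\ne\emptyset$, if some $(S_1,H_1)\in\mathcal{S}_1$ has $H_1=H_2$, then some such $(S_1,H_1)$ satisfies $(S_1,H_1)\le(S_2,H_2)$. $\mathcal{S}_1\prec\mathcal{S}_2$ means $\mathcal{S}_1\preceq\mathcal{S}_2$ and $\mathcal{S}_1\ne\mathcal{S}_2$. *)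

(* Defs.v *)
From mathcomp Require Import all_boot all_order.
From mathcomp Require Import boolp.
Set Implicit Arguments. Unset Strict Implicit. Unset Printing Implicit Defensive.

Section Cactus.
Variables (X V : finType) (A : rel V) (rho : V) (phi : X -> V).

Definition indeg (v : V) : nat := #|[set p | A p v]|.
Definition outdeg (v : V) : nat := #|[set c | A v c]|.
Definition is_leaf (v : V) : bool := outdeg v == 0.
Definition is_tree_vertex (v : V) : bool := indeg v <= 1.
Definition is_reticulation (v : V) : bool := 2 <= indeg v.

Definition acyclic : Prop := forall u v, A u v -> ~~ connect A v u.
Definition rooted_dag : Prop :=
  [/\ acyclic, (forall p, ~~ A p rho) & (forall v, connect A rho v)].

(* directed path s = v0 -> v1 -> ... -> vk = t, written as s and (v1..vk) *)
Definition dpath (s : V) (p : seq V) (t : V) : bool :=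
  [&& path A s p, last s p == t & uniq (s :: p)].
Definition path_arcs (s : V) (p : seq V) : seq (V * V) := zip (s :: p) p.

Definition ret_cycle (s t : V) (p1 p2 : seq V) : Prop :=
  [/\ dpath s p1 t, dpath s p2 t, p1 != p2 &
      forall v, v \in s :: p1 -> v \in s :: p2 -> v = s \/ v = t].
Definition cycle_arcs (s : V) (p1 p2 : seq V) : seq (V * V) :=
  path_arcs s p1 ++ path_arcs s p2.

(* a reticulation cycle is the unordered pair of its two paths *)
Definition no_shared_arc : Prop :=
  forall s t p1 p2 s' t' q1 q2,
    ret_cycle s t p1 p2 -> ret_cycle s' t' q1 q2 ->
    (exists e, e \in cycle_arcs s p1 p2 /\ e \in cycle_arcs s' q1 q2) ->
    s = s' /\ ((p1 = q1 /\ p2 = q2) \/ (p1 = q2 /\ p2 = q1)).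

Definition rooted_cactus : Prop :=
  [/\ rooted_dag,
      (forall v, indeg v <= 2),
      no_shared_arc &
      (forall v, (is_leaf v || (is_tree_vertex v && (outdeg v == 1))) ->
                 exists x, phi x = v)].

(* time-stamp functions; a ranking takes values in {0,...,sigma}, so we
   take time-stamps with natural-number values here *)
Definition is_time_stamp (t : V -> nat) : Prop :=
  [/\ (forall x, t (phi x) = 0),
      (forall u v, A u v -> ~~ is_reticulation v -> t v < t u) &
      (forall p v, A p v -> is_reticulation v -> t p = t v)].

(* size sigma(r) = |r(V)| - 1 ; for a ranking this is the maximal value *)
Definition sigma (r : V -> nat) : nat := \max_(v : V) r v.

Definition is_ranking (r : V -> nat) : Prop :=
  is_time_stamp r /\ (forall k, k <= sigma r -> exists v, r v = k).

Definition ranked_cactus (r : V -> nat) : Prop :=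
  rooted_cactus /\ is_ranking r.

Definition root_path (p : seq V) (u : V) : bool := path A rho p && (last rho p == u).
Definition descendant (u v : V) : Prop :=
  exists p, root_path p u /\ v \in rho :: p.
Definition strict_descendant (u v : V) : Prop :=
  descendant u v /\ (forall p, root_path p u -> v \in rho :: p).
Definition nonstrict_descendant (u v : V) : Prop :=
  descendant u v /\ ~ (forall p, root_path p u -> v \in rho :: p).

Definition Sset (u : V) : {set X} := [set x | `[< strict_descendant (phi x) u >]].
Definition Hset (u : V) : {set X} := [set x | `[< nonstrict_descendant (phi x) u >]].

Definition Vi (r : V -> nat) (i : nat) : {set V} :=
  [set u | (r u <= i) && [forall p, A p u ==> (i < r p)]].

Definition Si (r : V -> nat) (i : nat) : {set {set X} * {set X}} :=
  [set (Sset u, Hset u) | u in Vi r i] :|: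
  [set (Hset u, set0) | u in [set u in Vi r i | Hset u != set0]].

End Cactus.

Definition sp_le (X : finType) (a b : {set X} * {set X}) : bool :=
  let: (S1, H1) := a in let: (S2, H2) := b in
  [|| a == b, (S1 :|: H1) \subset S2, (S1 :|: H1) \subset H2 |
      [&& S1 \proper S2, H1 == H2 & H2 != set0]].

Definition sps_le (X : finType) (S1 S2 : {set {set X} * {set X}}) : Prop :=
  (forall a, a \in S1 -> exists2 b, b \in S2 & sp_le a b) /\
  (forall b, b \in S2 -> b.2 != set0 ->
     (exists2 a, a \in S1 & a.2 = b.2) ->
     exists2 a, a \in S1 & a.2 = b.2 /\ sp_le a b).

Definition sps_lt (X : finType) (S1 S2 : {set {set X} * {set X}}) : Prop :=
  sps_le S1 S2 /\ S1 <> S2.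

(* Main.v *)
Require Import Defs.
From mathcomp Require Import all_boot all_order.
From mathcomp Require Import boolp.
Set Implicit Arguments. Unset Strict Implicit. Unset Printing Implicit Defensive.

Section SeqL.
Variable T : eqType.

Lemma arc_split (s : T) p x y :
  (x, y) \in zip (s :: p) p <-> exists l1 l2, s :: p = l1 ++ x :: y :: l2.
Proof.
elim: p s => [|z p IH] s /=.
  split=> // [[l1 [l2]]]; case: l1 => [|? [|? ?]] //.
rewrite in_cons; split.
  case/orP=> [/eqP [-> ->]|]; first by exists [::], p.
  by case/IH=> l1 [l2 e]; exists (s :: l1), l2; rewrite e.
case=> [[|a l1] [l2]] /=; first by case=> -> -> _; rewrite eqxx.
case=> _ e; apply/orP; right; apply/IH; by exists l1, l2.
Qed.

Lemma arc_mem (s : T) p x y :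
  (x, y) \in zip (s :: p) p -> x \in s :: p /\ y \in p.
Proof.
case/arc_split=> l1 [l2 e]; split; first by rewrite e mem_cat !inE eqxx orbT.
case: l1 e => [|a l1] /=; case=> _ ->; rewrite ?inE ?eqxx ?orbT //.
by rewrite mem_cat !inE eqxx !orbT.
Qed.

Lemma arc_infix (s : T) p a q l1 l2 x y :
  s :: p = l1 ++ a :: q ++ l2 -> (x, y) \in zip (a :: q) q -> (x, y) \in zip (s :: p) p.
Proof.
move=> e /arc_split [k1 [k2 e2]]; apply/arc_split.
exists (l1 ++ k1), (k2 ++ l2); rewrite e -catA -cat_cons e2 -catA //.
Qed.

Lemma split_first (P : pred T) s : has P s ->
  exists s1 x s2, [/\ s = s1 ++ x :: s2, P x & ~~ has P s1].
Proof.
elim: s => [|y s IH] //= /orP [Py|Hs].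
  by exists [::], y, s.
case: (boolP (P y)) => Py; first by exists [::], y, s.
case: (IH Hs) => s1 [x [s2 [e Px Hn]]]; exists (y :: s1), x, s2.
by rewrite e /= (negbTE Py).
Qed.

Lemma split_last (P : pred T) s : has P s ->
  exists s1 x s2, [/\ s = s1 ++ x :: s2, P x & ~~ has P s2].
Proof.
elim: s => [|y s IH] //= /orP Hs.
case: (boolP (has P s)) => Hs'.
  case: (IH Hs') => s1 [x [s2 [e Px Hn]]]; exists (y :: s1), x, s2.
  by rewrite e.
case: Hs => [Py|H]; last by rewrite H in Hs'.
by exists [::], y, s.
Qed.

Lemma arc_succ (s : T) p x : x \in s :: p -> x != last s p ->
  exists y, (x, y) \in zip (s :: p) p.
Proof.
elim: p s => [|z p IH] s /=; first by rewrite inE => /eqP ->; rewrite eqxx.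
rewrite inE => /orP [/eqP ->|xp] ne.
  by exists z; rewrite inE eqxx.
case: (IH z xp ne) => y Hy; exists y; by rewrite inE Hy orbT.
Qed.

Lemma arc_pred (s : T) p x : x \in p -> exists y, (y, x) \in zip (s :: p) p.
Proof.
elim: p s => [|z p IH] s //=; rewrite inE => /orP [/eqP ->|xp].
  by exists s; rewrite inE eqxx.
case: (IH z xp) => y Hy; exists y; by rewrite inE Hy orbT.
Qed.

Lemma arc_uniq_succ (s : T) p x y y' : uniq (s :: p) ->
  (x, y) \in zip (s :: p) p -> (x, y') \in zip (s :: p) p -> y = y'.
Proof.
move=> U /arc_split [l1 [l2 e]] /arc_split [k1 [k2 e']].
rewrite e in U e'.
have : index x (l1 ++ x :: y :: l2) = index x (k1 ++ x :: y' :: k2) by rewrite e'.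
have xl1 : x \notin l1.
  by move: U; rewrite cat_uniq => /and3P [_ /hasPn H _]; apply: H; rewrite inE eqxx.
have xk1 : x \notin k1.
  by move: U; rewrite e' cat_uniq => /and3P [_ /hasPn H _]; apply: H; rewrite inE eqxx.
rewrite !index_cat (negbTE xl1) (negbTE xk1) /= eqxx !addn0 => ei.
have := congr1 (nth x ^~ (size l1).+1) e'.
by rewrite !nth_cat ltnNge leqnSn /= subSn // subnn /= ei ltnNge leqnSn /= subSn // subnn.
Qed.

Lemma arc_uniq_pred (s : T) p x y y' : uniq (s :: p) ->
  (y, x) \in zip (s :: p) p -> (y', x) \in zip (s :: p) p -> y = y'.
Proof.
move=> U /arc_split [l1 [l2 e]] /arc_split [k1 [k2 e']].
rewrite e in U e'.
have xl1 : x \notin l1 ++ [:: y].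
  move: U; rewrite -(cat1s y) catA cat_uniq => /and3P [_ /hasPn H _].
  by apply: H; rewrite inE eqxx.
have xk1 : x \notin k1 ++ [:: y'].
  move: U; rewrite e' -(cat1s y') catA cat_uniq => /and3P [_ /hasPn H _].
  by apply: H; rewrite inE eqxx.
have : index x ((l1 ++ [:: y]) ++ x :: l2) = index x ((k1 ++ [:: y']) ++ x :: k2).
  by rewrite -!catA /= e'.
rewrite !index_cat (negbTE xl1) (negbTE xk1) /= eqxx !addn0 !size_cat /= !addn1 => [[ei]].
have := congr1 (nth x ^~ (size l1)) e'.
by rewrite !nth_cat ltnn subnn /= ei ltnn subnn.
Qed.

End SeqL.

Section G.
Variables (X V : finType) (A : rel V) (rho : V) (phi : X -> V) (r : V -> nat).
Hypothesis Hcac : rooted_cactus A rho phi.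
Hypothesis Hrk : is_ranking A phi r.

Lemma acyc u v : A u v -> ~~ connect A v u.
Proof. by case: Hcac => [[H _ _] _ _ _]; apply: H. Qed.

Lemma noroot p : ~~ A p rho.
Proof. by case: Hcac => [[_ H _] _ _ _]. Qed.

Lemma reach_root v : connect A rho v.
Proof. by case: Hcac => [[_ _ H] _ _ _]. Qed.

Lemma noloop u : ~~ A u u.
Proof. by apply/negP => H; move: (acyc H); rewrite connect0. Qed.

Lemma conn_step u v : connect A u v -> u != v -> exists2 c, A u c & connect A c v.
Proof.
case/connectP => p; case: p => [|c p] /=; first by move=> _ ->; rewrite eqxx.
by case/andP => Auc pp -> _; exists c => //; apply/connectP; exists p.
Qed.

Lemma conn_last u v : connect A u v -> u != v -> exists2 c, connect A u c & A c v.
Proof.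
case/connectP => p; case/lastP: p => [|p c] /=; first by move=> _ ->; rewrite eqxx.
rewrite rcons_path last_rcons => /andP [pp Al] -> _.
by exists (last u p) => //; apply/connectP; exists p.
Qed.

Lemma antisym u v : connect A u v -> connect A v u -> u = v.
Proof.
move=> Huv Hvu; apply/eqP/negPn/negP => ne.
case: (conn_step Huv ne) => c Auc Hcv.
by move: (acyc Auc); rewrite (connect_trans Hcv Hvu).
Qed.

Lemma path_conn s p x : path A s p -> x \in s :: p ->
  connect A s x /\ connect A x (last s p).
Proof.
move=> pp xin; split; first exact: (path_connect pp).
case/splitPl: xin pp => p1 p2 <-; rewrite cat_path => /andP [_ pp2].
by rewrite last_cat; apply/connectP; exists p2.
Qed.

Lemma path_uniq s p : path A s p -> uniq (s :: p).
Proof.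
elim: p s => [|c p IH] s //= /andP [Asc pp].
have := IH _ pp; rewrite /= => ->; rewrite andbT.
apply/negP => sin.
have [Hc _] := path_conn pp (sin : s \in c :: p).
by move: (acyc Asc); rewrite Hc.
Qed.

Lemma path_order s p x y : path A s p -> x \in s :: p -> y \in s :: p ->
  connect A x y \/ connect A y x.
Proof.
move=> pp xin yin; case/splitPl: xin pp yin => p1 p2 <-.
rewrite cat_path -cat_cons mem_cat => /andP [pp1 pp2] /orP [yin|yin].
  by right; have [_ ->] := path_conn pp1 yin.
by left; apply: (path_connect pp2); rewrite inE yin orbT.
Qed.

Lemma r_lab x : r (phi x) = 0.
Proof. by case: Hrk => [[H _ _] _]. Qed.

Lemma r_arc u v : A u v -> r v <= r u.
Proof.
case: Hrk => [[_ H1 H2] _] Auv.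
case: (boolP (is_reticulation A v)) => Hv; first by rewrite (H2 _ _ Auv Hv).
exact: ltnW (H1 _ _ Auv Hv).
Qed.

Lemma r_tree u v : A u v -> ~~ is_reticulation A v -> r v < r u.
Proof. by case: Hrk => [[_ H1 _] _]; apply: H1. Qed.

Lemma r_ret u v : A u v -> is_reticulation A v -> r u = r v.
Proof. by case: Hrk => [[_ _ H2] _]; apply: H2. Qed.

Lemma r_path s p : path A s p -> r (last s p) <= r s.
Proof.
elim: p s => [|c p IH] s //= /andP [Asc pp].
exact: leq_trans (IH _ pp) (r_arc Asc).
Qed.

Lemma r_reach u v : connect A u v -> r v <= r u.
Proof. by case/connectP => p pp ->; apply: r_path. Qed.

Lemma retic_two a b v : A a v -> A b v -> a != b -> is_reticulation A v.
Proof.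
move=> Aa Ab ne; rewrite /is_reticulation /indeg.
have <- : #|[set a; b]| = 2 by rewrite cards2 ne.
by apply: subset_leq_card; apply/subsetP => z; rewrite !inE => /orP [] /eqP ->.
Qed.

Lemma tree_par a b v : ~~ is_reticulation A v -> A a v -> A b v -> a = b.
Proof.
move=> Hv Aa Ab; apply/eqP/negPn/negP => ne.
by move: Hv; rewrite (retic_two Aa Ab ne).
Qed.

Lemma indeg3 a b c v : A a v -> A b v -> A c v -> a != b -> a != c -> b != c -> False.
Proof.
move=> Aa Ab Ac nab nac nbc.
case: Hcac => [_ Hdeg _ _].
have H3 : 3 <= #|[set p | A p v]|.
  have -> : 3 = #|[set a; b; c]|.
    by rewrite -setUA cardsU1 cards2 nbc !inE negb_or nab nac.
  by apply: subset_leq_card; apply/subsetP => z; rewrite !inE => /orP [/orP []|] /eqP ->.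
by move: (leq_trans H3 (Hdeg v)).
Qed.

Lemma retic_par v : is_reticulation A v -> exists p, A p v.
Proof.
rewrite /is_reticulation /indeg => H.
have : 0 < #|[set p | A p v]| by apply: leq_trans H.
by case/card_gt0P => p; rewrite inE; exists p.
Qed.

Lemma par_exists v : v != rho -> exists p, A p v.
Proof.
move=> ne; case: (conn_last (reach_root v)) => [|c _ Acv]; last by exists c.
by rewrite eq_sym.
Qed.

Lemma label_cond v : (is_leaf A v || (is_tree_vertex A v && (outdeg A v == 1))) ->
  exists x, phi x = v.
Proof. by case: Hcac => [_ _ _ H]; apply: H. Qed.

Lemma has_child v : (forall x, phi x != v) -> exists c, A v c.
Proof.
move=> nl; case: (pickP [pred c | A v c]) => [c Ac|none]; first by exists c.
have : is_leaf A v.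
  rewrite /is_leaf /outdeg; apply/eqP; apply/eqP; rewrite cards_eq0; apply/eqP.
  by apply/setP => z; rewrite !inE; move: (none z).
by move/(fun h => label_cond (introT orP (or_introl h))) => [x /eqP]; rewrite (negbTE (nl x)).
Qed.

Lemma two_children v : (forall x, phi x != v) -> ~~ is_reticulation A v ->
  exists c1 c2, [/\ A v c1, A v c2 & c1 != c2].
Proof.
move=> nl tv.
have H1 : 1 < outdeg A v.
  rewrite ltnNge; apply/negP => H.
  case: (label_cond (v := v)) => [|x /eqP]; last by rewrite (negbTE (nl x)).
  apply/orP; case: (has_child nl) => c Ac; right; rewrite /is_tree_vertex.
  rewrite leqNgt tv /= eqn_leq H /= /outdeg card_gt0; apply/set0Pn; exists c; by rewrite inE.
by case/card_gt1P: H1 => c1 [c2 [h1 h2 ne]]; exists c1, c2; rewrite !inE in h1 h2.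
Qed.

Lemma leaf_label v : exists x, connect A v (phi x).
Proof.
have [n Hn] : exists n, #|[set y | connect A v y]| <= n by exists #|[set y | connect A v y]|.
elim: n v Hn => [|n IH] v Hn.
  have : 0 < #|[set y | connect A v y]| by apply/card_gt0P; exists v; rewrite inE connect0.
  by rewrite leqn0 in Hn; rewrite (eqP Hn).
case: (boolP [exists x, phi x == v]) => [/existsP [x /eqP <-]|nl].
  by exists x; rewrite connect0.
have nl' : forall x, phi x != v by move=> x; apply: contraNneq nl => <-; apply/existsP; exists x.
case: (has_child nl') => c Ac.
have sub : [set y | connect A c y] \proper [set y | connect A v y].
  rewrite properE; apply/andP; split.
    by apply/subsetP => y; rewrite !inE; apply: connect_trans; apply: connect1.
  apply/subsetPn; exists v; rewrite !inE ?connect0 //.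
  exact: acyc.
case: (IH c _) => [|x Hx]; last by exists x; apply: connect_trans (connect1 Ac) Hx.
by rewrite -ltnS; apply: leq_trans (proper_card sub) Hn.
Qed.


Definition dom (u y : V) := forall p, root_path A rho p y -> u \in rho :: p.

Lemma rootpath_ex y : exists p, root_path A rho p y.
Proof. by case/connectP: (reach_root y) => p pp ->; exists p; rewrite /root_path pp eqxx. Qed.

Lemma desc_iff y u : descendant A rho y u <-> connect A u y.
Proof.
split.
  case=> p [/andP [pp /eqP <-] uin]; by have [_ ->] := path_conn pp uin.
case/connectP => q qq ->; case/connectP: (reach_root u) => p pp ep.
exists (p ++ q); split.
  by rewrite /root_path cat_path pp -ep qq last_cat -ep eqxx.
by rewrite -cat_cons mem_cat ep mem_last.
Qed.

Lemma dom_reach u y : dom u y -> connect A u y.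
Proof.
move=> H; case: (rootpath_ex y) => p rp; have := H _ rp.
by case/andP: rp => pp /eqP <- /(path_conn pp) [].
Qed.

Lemma strict_iff y u : strict_descendant A rho y u <-> dom u y.
Proof.
split; first by case.
move=> H; split => //; exact/desc_iff/dom_reach.
Qed.

Lemma nonstrict_iff y u : nonstrict_descendant A rho y u <-> connect A u y /\ ~ dom u y.
Proof. by split; case=> [/desc_iff H1 H2]; split => //; apply/desc_iff. Qed.

Lemma inS x u : (x \in Sset A rho phi u) <-> dom u (phi x).
Proof. rewrite /Sset inE; split => [/asboolP/strict_iff //|/strict_iff/asboolP //]. Qed.

Lemma inH x u : (x \in Hset A rho phi u) <-> connect A u (phi x) /\ ~ dom u (phi x).
Proof. rewrite /Hset inE; split => [/asboolP/nonstrict_iff //|/nonstrict_iff/asboolP //]. Qed.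

Lemma dom_trans a b c : dom a b -> dom b c -> dom a c.
Proof.
move=> Hab Hbc p rp; have := Hbc _ rp; case/andP: rp => pp /eqP ep bin.
case/splitPl: bin pp ep => p1 p2 e1; rewrite cat_path -cat_cons mem_cat => /andP [pp1 _] _.
by rewrite (Hab p1) // /root_path pp1 e1 eqxx.
Qed.

Lemma dom_refl u : dom u u.
Proof. by move=> p /andP [_ /eqP <-]; apply: mem_last. Qed.

Lemma dom_root y : dom rho y.
Proof. by move=> p _; rewrite mem_head. Qed.

Lemma dom_cmp a b y : dom a y -> dom b y -> connect A a b \/ connect A b a.
Proof.
move=> Ha Hb; case: (rootpath_ex y) => p rp.
by case/andP: (rp) => pp _; apply: (path_order pp (Ha _ rp) (Hb _ rp)).
Qed.

Lemma rootpath_cat p q : path A rho p -> path A (last rho p) q ->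
  path A rho (p ++ q) /\ last rho (p ++ q) = last (last rho p) q.
Proof. by move=> pp qq; rewrite cat_path pp qq last_cat. Qed.

Lemma dom_via w u y : dom w y -> connect A u y -> ~ connect A u w -> dom w u.
Proof.
move=> Hw Huy nwu p /andP [pp /eqP ep].
case/connectP: Huy => q qq ey.
have := Hw (p ++ q); rewrite /root_path cat_path pp last_cat ep qq -ey eqxx => /(_ isT).
rewrite -cat_cons mem_cat => /orP [//|wq].
by case: nwu; apply: (path_connect qq); rewrite inE wq orbT.
Qed.

Lemma sigma_rho : sigma r = r rho.
Proof.
apply/eqP; rewrite eqn_leq; apply/andP; split.
  by apply/bigmax_leqP => v _; apply: r_reach; apply: reach_root.
by apply: (leq_bigmax rho).
Qed.

Lemma le_sigma v : r v <= sigma r.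
Proof. by rewrite sigma_rho; apply: r_reach; apply: reach_root. Qed.

Lemma inVi u i : (u \in Vi A r i) = (r u <= i) && [forall p, A p u ==> (i < r p)].
Proof. by rewrite /Vi inE. Qed.

Lemma Vi_tree u i : u \in Vi A r i -> ~~ is_reticulation A u.
Proof.
rewrite inVi => /andP [ri /forallP H]; apply/negP => ret.
case: (retic_par ret) => p Apu; move: (H p); rewrite Apu /= (r_ret Apu ret).
by rewrite ltnNge ri.
Qed.

Lemma Vi_reach u v i : u \in Vi A r i -> v \in Vi A r i -> connect A u v -> u = v.
Proof.
move=> Hu Hv Huv; apply/eqP/negPn/negP => ne.
case: (conn_last Huv ne) => q Huq Aqv.
move: Hv; rewrite inVi => /andP [_ /forallP /(_ q)]; rewrite Aqv /= => iq.
move: Hu; rewrite inVi => /andP [ri _].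
by move: (leq_trans (r_reach Huq) ri); rewrite leqNgt iq.
Qed.

Lemma Vi_on_path a p i : path A a p -> r (last a p) <= i < r a ->
  exists2 v, v \in p & v \in Vi A r i.
Proof.
elim: p a => [|c p IH] a /=; first by move=> _ /andP [H1 H2]; move: (leq_ltn_trans H1 H2); rewrite ltnn.
case/andP => Aac pp /andP [Hl ia].
case: (leqP (r c) i) => ci.
  exists c; first by rewrite mem_head.
  have tc : ~~ is_reticulation A c.
    by apply/negP => ret; move: ia; rewrite (r_ret Aac ret) ltnNge ci.
  rewrite inVi ci /=; apply/forallP => q; apply/implyP => Aqc.
  by rewrite (tree_par tc Aqc Aac).
case: (IH c pp); first by rewrite Hl ci.
by move=> v vin Hv; exists v => //; rewrite inE vin orbT.
Qed.

Lemma Vi_above u i : r u <= i -> exists2 w, w \in Vi A r i & connect A w u.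
Proof.
move=> ui; case: (leqP (r rho) i) => ri.
  exists rho; last exact: reach_root.
  rewrite inVi ri /=; apply/forallP => p; by rewrite (negbTE (noroot p)).
case/connectP: (reach_root u) => p pp eu.
case: (Vi_on_path pp (i := i)); first by rewrite -eu ui ri.
move=> w win Hw; exists w => //.
have wi : w \in rho :: p by rewrite inE win orbT.
by have [_ H] := path_conn pp wi; rewrite eu.
Qed.

Lemma Vi_sigma : Vi A r (sigma r) = [set rho].
Proof.
apply/setP => v; rewrite inVi inE le_sigma /=.
apply/forallP/eqP => [H|->]; last by move=> p; rewrite (negbTE (noroot p)).
apply/eqP/negPn/negP => ne; case: (par_exists ne) => p Apv.
by move: (H p); rewrite Apv /= ltnNge le_sigma.
Qed.

Lemma Vi_rank j : j <= sigma r -> exists2 w, w \in Vi A r j & r w = j.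
Proof.
move=> js; case: Hrk => [_ /(_ j js) [v0 rv0]].
pose anc v := #|[set z | connect A z v]|.
have exn : exists n, [exists v, (r v == j) && (anc v == n)].
  by exists (anc v0); apply/existsP; exists v0; rewrite rv0 !eqxx.
case: (ex_minnP exn) => n /existsP [w /andP [/eqP Pw /eqP aw]] Hmin.
exists w => //; rewrite inVi Pw leqnn /=; apply/forallP => p; apply/implyP => Apw.
rewrite -Pw ltn_neqAle (r_arc Apw) andbT; apply/negP => /eqP ep.
have : n <= anc p by apply: Hmin; apply/existsP; exists p; rewrite -ep Pw !eqxx.
rewrite -aw leqNgt => /negP; apply; apply: proper_card.
rewrite properE; apply/andP; split.
  by apply/subsetP => z; rewrite !inE => Hz; apply: connect_trans Hz (connect1 Apw).
apply/subsetPn; exists w; rewrite !inE ?connect0 //; exact: acyc.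
Qed.


Lemma mem_split (x : V) s : x \in s -> exists s1 s2, s = s1 ++ x :: s2.
Proof.
move=> xin; case: (split_first (P := pred1 x) (s := s)) => [|s1 [y [s2 [e /eqP ey _]]]].
  by rewrite has_pred1.
by exists s1, s2; rewrite e ey.
Qed.

Lemma path_infix x p l1 y q l2 : path A x p -> x :: p = l1 ++ y :: q ++ l2 -> path A y q.
Proof.
move=> pp; case: l1 => [|h l1] /= [ex ep]; rewrite ep in pp.
  by rewrite -ex; move: pp; rewrite cat_path => /andP [].
by move: pp; rewrite cat_path => /andP [_ /=] /andP [_]; rewrite cat_path => /andP [].
Qed.

Lemma uniq_infix (l1 : seq V) y q l2 : uniq (l1 ++ y :: q ++ l2) -> uniq (y :: q).
Proof. by rewrite cat_uniq -cat_cons cat_uniq => /and3P [_ _ /andP []]. Qed.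

Lemma mem_infix (l1 : seq V) y q l2 v : v \in y :: q -> v \in l1 ++ y :: q ++ l2.
Proof. by rewrite -cat_cons !mem_cat => ->; rewrite orbT. Qed.

Lemma extract z R Q a0 b0 :
  path A z R -> path A z Q -> last z R = last z Q ->
  (a0, b0) \in zip (z :: R) R -> (a0, b0) \notin zip (z :: Q) Q ->
  exists s t p1 p2, [/\ ret_cycle A s t p1 p2, (a0, b0) \in zip (s :: p1) p1,
     s \in z :: Q, t \in z :: Q &
     [/\ connect A s a0, connect A b0 t, connect A t (last z R),
         (a0 \in z :: Q -> s = a0) & (b0 \in z :: Q -> t = b0)]].
Proof.
move=> pR pQ eL arcR arcQ.
have uL := path_uniq pR; have uM := path_uniq pQ.
case/arc_split: (arcR) => l1 [l2 eR].
have hasP1 : has (mem (z :: Q)) (l1 ++ [:: a0]).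
  apply/hasP; exists z; last exact: mem_head.
  by case: l1 eR => [|h l1] [-> _]; rewrite /= ?inE ?eqxx.
case: (split_last hasP1) => P [a [mid1 [e1 aM nM1]]].
have hasS : has (mem (z :: Q)) (b0 :: l2).
  apply/hasP; exists (last z Q); last exact: mem_last.
  by rewrite -eL; have -> : last z R = last z (z :: R) by []; rewrite eR last_cat /= mem_last.
case: (split_first hasS) => mid2 [m [S2 [e2 mM nM2]]].
have {}aM : a \in z :: Q := aM.
have {}mM : m \in z :: Q := mM.
have eL2 : z :: R = P ++ a :: (mid1 ++ mid2 ++ [:: m]) ++ S2.
  have -> : z :: R = (l1 ++ [:: a0]) ++ b0 :: l2 by rewrite eR -catA.
  by rewrite e1 e2 -!catA /=; congr (_ ++ _ :: _); rewrite /p1 -!catA.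
set p1 := mid1 ++ mid2 ++ [:: m].
have am : a != m.
  have := uL; rewrite eL2 => /uniq_infix /andP [anin _]; apply/eqP => eam.
  by move: anin; rewrite eam /p1 !mem_cat mem_head !orbT.
have [U [M' eM]] := mem_split aM.
have mM' : m \in M'.
  move: mM; rewrite eM mem_cat inE (eq_sym m a) (negbTE am) /= => /orP [mU|//].
  exfalso; have [U1 [U2 eU]] := mem_split mU.
  have pp : path A m (U2 ++ a :: M').
    by apply: (path_infix (l1 := U1) (l2 := [::]) pQ); rewrite eM eU -catA cats0.
  have c1 : connect A m a by case: (path_conn pp (_ : a \in m :: U2 ++ a :: M')) => //; rewrite inE mem_cat mem_head !orbT.
  have pp1 : path A a p1 by apply: (path_infix pR eL2).
  have c2 : connect A a m by case: (path_conn pp1 (_ : m \in a :: p1)) => //; rewrite inE /p1 !mem_cat mem_head !orbT.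
  by move: am; rewrite (antisym c2 c1) eqxx.
have [mid' [W eM']] := mem_split mM'.
set p2 := mid' ++ [:: m].
have eQ2 : z :: Q = U ++ a :: p2 ++ W by rewrite eM eM' /p2 -catA.
have pp1 : path A a p1 by apply: (path_infix pR eL2).
have pp2 : path A a p2 by apply: (path_infix pQ eQ2).
have lp1 : last a p1 = m by rewrite /p1 !last_cat.
have lp2 : last a p2 = m by rewrite /p2 last_cat.
have up1 : uniq (a :: p1) by apply: (uniq_infix (l1 := P) (l2 := S2)); rewrite -eL2.
have up2 : uniq (a :: p2) by apply: (uniq_infix (l1 := U) (l2 := W)); rewrite -eQ2.
have la : last a mid1 = a0.
  have := congr1 (last z) e1; rewrite !last_cat /=.
  by move=> ->.
have [k2 ek2] : exists k2, mid2 ++ [:: m] = b0 :: k2.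
  case E: mid2 => [|h t]; rewrite E /= in e2; case: e2 => -> _; first by exists [::].
  by exists (t ++ [:: m]).
have arc1 : (a0, b0) \in zip (a :: p1) p1.
  apply/arc_split; exists (belast a mid1), k2.
  have e3 : a :: mid1 = rcons (belast a mid1) a0 by rewrite -la -lastI.
  by rewrite /p1 -cat_cons e3 ek2 -cats1 -catA.
have nM1' : forall v, v \in mid1 -> v \notin z :: Q by apply/hasPn.
have nM2' : forall v, v \in mid2 -> v \notin z :: Q by apply/hasPn.
exists a, m, p1, p2; split => //.
- split => //; rewrite /dpath ?pp1 ?pp2 ?lp1 ?lp2 ?eqxx ?up1 ?up2 //.
  + apply/eqP => e12; move: arcQ; rewrite (arc_infix eQ2) //; by rewrite -e12.
  + move=> v; rewrite inE => /orP [/eqP ->|]; first by left.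
    rewrite /p1 !mem_cat inE => /orP [vm1|/orP [vm2|/eqP ->]] vin2; last by right.
    * by exfalso; move: (nM1' _ vm1); rewrite eQ2 (mem_infix _ _ vin2).
    * by exfalso; move: (nM2' _ vm2); rewrite eQ2 (mem_infix _ _ vin2).
- split.
  + have : a0 \in a :: p1 by case: (arc_mem arc1).
    by case/(path_conn pp1).
  + have : b0 \in a :: p1 by case: (arc_mem arc1) => _ H; rewrite inE H orbT.
    by case/(path_conn pp1) => _; rewrite lp1.
  + have : m \in z :: R by rewrite eL2 mem_cat inE /p1 !mem_cat mem_head !orbT.
    by case/(path_conn pR).
  + move=> a0M; case E: mid1 la nM1' => [|h t] /= la nM1'; first by [].
    by exfalso; move: (nM1' (last h t)); rewrite mem_last la a0M => /(_ isT).
  + move=> b0M; case E: mid2 e2 nM2' => [|h t] /= [eb _] nM2'; first by [].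
    by exfalso; move: (nM2' h); rewrite mem_head -eb b0M => /(_ isT).
Qed.


Lemma arc_at (s : V) p y q : (last s p, y) \in zip (s :: p ++ y :: q) (p ++ y :: q).
Proof.
apply/arc_split; exists (belast s p), q.
by rewrite -cat_cons lastI cat_rcons.
Qed.

Lemma arc_rel s p x y : path A s p -> (x, y) \in zip (s :: p) p -> A x y.
Proof.
move=> pp /arc_split [l1 [l2 e]].
have e' : s :: p = l1 ++ x :: (y :: l2) ++ [::] by rewrite cats0.
by have := path_infix pp e'; case/andP.
Qed.

Lemma uniq_last_self (s : V) p : uniq (s :: p) -> last s p = s -> p = [::].
Proof.
case: p => // h p /andP [sn _] el; move: sn; rewrite -el.
by rewrite (mem_last h p).
Qed.

Lemma cyc_sym s t p1 p2 : ret_cycle A s t p1 p2 -> ret_cycle A s t p2 p1.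
Proof. by case=> d1 d2 ne H; split => //; [rewrite eq_sym | move=> v h1 h2; apply: H]. Qed.

Lemma cyc_side s t p1 p2 : ret_cycle A s t p1 p2 ->
  [/\ path A s p1, last s p1 = t & uniq (s :: p1)].
Proof. by case=> /and3P [pp /eqP lp up] _ _ _. Qed.

Lemma cyc_st s t p1 p2 : ret_cycle A s t p1 p2 -> s != t.
Proof.
move=> C; apply/eqP => est.
have [_ l1 u1] := cyc_side C; have [_ l2 u2] := cyc_side (cyc_sym C).
rewrite -est in l1 l2.
case: C => _ _ ne _; move: ne.
by rewrite (uniq_last_self u1 l1) (uniq_last_self u2 l2) eqxx.
Qed.

Lemma cyc_t_in s t p1 p2 : ret_cycle A s t p1 p2 -> t \in p1.
Proof.
move=> C; have [_ l1 _] := cyc_side C; have := mem_last s p1.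
by rewrite l1 inE eq_sym (negbTE (cyc_st C)).
Qed.

Lemma cyc_s_notin s t p1 p2 : ret_cycle A s t p1 p2 -> s \notin p1.
Proof. by case/cyc_side => _ _ /andP []. Qed.

Lemma cyc_conn s t p1 p2 v : ret_cycle A s t p1 p2 -> v \in s :: p1 ->
  connect A s v /\ connect A v t.
Proof. by move=> C vin; have [pp l1 _] := cyc_side C; rewrite -l1; apply: path_conn. Qed.

Lemma same_cycle s t p1 p2 s' t' q1 q2 e :
  ret_cycle A s t p1 p2 -> ret_cycle A s' t' q1 q2 ->
  e \in zip (s :: p1) p1 -> e \in zip (s' :: q1) q1 -> s = s' /\ t = t'.
Proof.
move=> C C' e1 e2.
case: Hcac => [_ _ Hns _].
have m1 : e \in cycle_arcs s p1 p2 by rewrite /cycle_arcs mem_cat e1.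
have m2 : e \in cycle_arcs s' q1 q2 by rewrite /cycle_arcs mem_cat e2.
have [es H] := Hns _ _ _ _ _ _ _ _ C C' (ex_intro _ e (conj m1 m2)).
split => //.
have [_ l1 _] := cyc_side C; have [_ l2 _] := cyc_side (cyc_sym C).
have [_ l1' _] := cyc_side C'; have [_ l2' _] := cyc_side (cyc_sym C').
by case: H => [[f _]|[f _]]; rewrite -l1 f es; [exact: l1' | exact: l2'].
Qed.

Lemma side_head (s : V) p y : uniq (s :: p) -> (s, y) \in zip (s :: p) p -> last s p = y -> p = [:: y].
Proof.
case: p => [|h p] //= U ar el.
have ey : y = h by apply: (arc_uniq_succ U ar); rewrite inE eqxx.
rewrite ey in el *; congr (_ :: _); apply: (uniq_last_self (s := h)) => //.
by case/andP: U.
Qed.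

Lemma sink_preds s t p1 p2 : ret_cycle A s t p1 p2 ->
  exists c d, [/\ (c, t) \in zip (s :: p1) p1, (d, t) \in zip (s :: p2) p2 & c != d].
Proof.
move=> C; have [c Hc] := arc_pred s (cyc_t_in C).
have [d Hd] := arc_pred s (cyc_t_in (cyc_sym C)).
exists c, d; split => //; apply/eqP => ecd; rewrite -ecd in Hd.
have [pp1 l1 u1] := cyc_side C; have [pp2 l2 u2] := cyc_side (cyc_sym C).
case: (arc_mem Hc) => c1 _; case: (arc_mem Hd) => c2 _.
case: C => _ _ ne H; case: (H c c1 c2) => ec.
  rewrite ec in Hc Hd.
  by move/eqP: ne; apply; rewrite (side_head u1 Hc l1) (side_head u2 Hd l2).
by move: (noloop t); rewrite -{1}ec (arc_rel pp1 Hc).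
Qed.

Lemma sink_retic s t p1 p2 : ret_cycle A s t p1 p2 -> is_reticulation A t.
Proof.
move=> C; have [c [d [Hc Hd ne]]] := sink_preds C.
have [pp1 _ _] := cyc_side C; have [pp2 _ _] := cyc_side (cyc_sym C).
exact: retic_two (arc_rel pp1 Hc) (arc_rel pp2 Hd) ne.
Qed.

Lemma interior_tree s t p1 p2 v : ret_cycle A s t p1 p2 -> v \in p1 -> v != t ->
  ~~ is_reticulation A v.
Proof.
move=> C vin vt; apply/negP => ret.
have [pp1 l1 u1] := cyc_side C.
have [c Hc] := arc_pred s vin.
have Acv := arc_rel pp1 Hc.
have [b [Abv bc]] : exists b, A b v /\ b != c.
  move: ret; rewrite /is_reticulation /indeg => /card_gt1P [x [y [hx hy nxy]]].
  rewrite !inE in hx hy.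
  case: (eqVneq x c) => [exc|nxc]; last by exists x.
  by exists y; split => //; rewrite -exc eq_sym.
have [P0 /andP [pP0 /eqP lP0]] := rootpath_ex s.
have [Pb /andP [pPb /eqP lPb]] := rootpath_ex b.
have [p1a [p1b e1]] := mem_split vin.
have ec : c = last s p1a.
  apply: (arc_uniq_pred u1 Hc); rewrite e1; exact: arc_at.
have pR : path A rho (P0 ++ rcons p1a v).
  rewrite cat_path pP0 lP0 rcons_path.
  by move: pp1; rewrite e1 cat_path => /andP [-> /= /andP [-> _]].
have pQ : path A rho (rcons Pb v) by rewrite rcons_path pPb lPb Abv.
have uQ := path_uniq pQ.
have arR : (c, v) \in zip (rho :: P0 ++ rcons p1a v) (P0 ++ rcons p1a v).
  have := @arc_at rho (P0 ++ p1a) v [::]; rewrite last_cat lP0 -ec.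
  by rewrite -catA cats1.
have arQ : (c, v) \notin zip (rho :: rcons Pb v) (rcons Pb v).
  apply/negP => H; move/eqP: bc; apply; rewrite -lPb.
  by apply: (arc_uniq_pred uQ _ H); have := @arc_at rho Pb v [::]; rewrite cats1.
have eLL : last rho (P0 ++ rcons p1a v) = last rho (rcons Pb v) by rewrite last_cat !last_rcons.
have [s' [t' [q1 [q2 [C' H1 _ _ [_ _ _ _ Ht]]]]]] := extract pR pQ eLL arR arQ.
have et' : t' = v by apply: Ht; rewrite -cats1 -cat_cons mem_cat mem_head orbT.
have [_ ett] := same_cycle C' C H1 Hc.
by move: vt; rewrite -ett et' eqxx.
Qed.

Lemma no_short s t p2 : ret_cycle A s t [:: t] p2 -> False.
Proof.
move=> C; have [pp2 l2 u2] := cyc_side (cyc_sym C).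
case: p2 C pp2 l2 u2 => [|h p2] C pp2 l2 u2.
  by move: (cyc_t_in (cyc_sym C)).
have ht : h != t.
  apply/eqP => eht; case: C => _ _ /eqP ne _; apply: ne; rewrite -eht.
  by rewrite (uniq_last_self (s := h) (p := p2)) //; [case/andP: u2|rewrite [in RHS]eht].
have trh := interior_tree (cyc_sym C) (mem_head h p2) ht.
case/andP: pp2 => Ash pp2'.
have r1 := r_tree Ash trh.
have r2 : r t <= r h by rewrite -l2; apply: r_path.
have Ast : A s t by case: (cyc_side C) => /andP [].
have r3 := r_ret Ast (sink_retic C).
by move: (leq_ltn_trans r2 r1); rewrite r3 ltnn.
Qed.


Lemma entry_contra s t p1 p2 q q' : ret_cycle A s t p1 p2 -> q \in p1 -> A q' q ->
  q' \notin s :: p1 ++ p2 -> False.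
Proof.
move=> C qin Aq' q'n.
have [pp1 l1 u1] := cyc_side C.
have [c Hc] := arc_pred s qin.
have Acq := arc_rel pp1 Hc.
have cin : c \in s :: p1 ++ p2.
  by case: (arc_mem Hc) => h _; move: h; rewrite -cat_cons mem_cat => ->.
have cq' : c != q' by apply: contraNneq q'n => <-.
case: (eqVneq q t) => [eqt|nqt].
  rewrite eqt in Hc Acq Aq'.
  have [c' [d [Hc' Hd ncd]]] := sink_preds C.
  have ecc : c = c' by apply: (arc_uniq_pred u1 Hc Hc').
  have [pp2 _ _] := cyc_side (cyc_sym C).
  have din : d \in s :: p1 ++ p2.
    case: (arc_mem Hd) => h _; move: h; rewrite !inE mem_cat => /orP [->|->] //.
    by rewrite !orbT.
  have dq' : d != q' by apply: contraNneq q'n => <-.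
  rewrite ecc in Acq cq'; exact: (indeg3 Acq (arc_rel pp2 Hd) Aq' ncd cq' dq').
have tq := interior_tree C qin nqt.
by move: cq'; rewrite (tree_par tq Acq Aq') eqxx.
Qed.

Lemma src_dom s t p1 p2 v : ret_cycle A s t p1 p2 -> v \in p1 -> dom s v.
Proof.
move=> C vin Q rQ; apply/negPn/negP => sQ.
case/andP: rQ => pQ /eqP lQ.
have hasC : has (mem (s :: p1 ++ p2)) (rho :: Q).
  have h : v \in s :: p1 ++ p2 by rewrite inE mem_cat vin orbT.
  by apply/hasP; exists v; [rewrite -lQ mem_last | exact: h].
case: (split_first hasC) => Q1 [q [Q2 [eQ qC nQ1]]].
have {}qC : q \in s :: p1 ++ p2 := qC.
have qs : q != s by apply: contraNneq sQ => <-; rewrite eQ mem_cat mem_head orbT.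
have qin : q \in p1 ++ p2 by move: qC; rewrite inE (negbTE qs).
case/lastP: Q1 eQ nQ1 => [|Q1 q'] eQ nQ1.
  case: eQ => eq _; rewrite -eq in qin.
  have [pa _ _] := cyc_side C; have [pb _ _] := cyc_side (cyc_sym C).
  move: qin; rewrite mem_cat => /orP [] qin.
    by have [c Hc] := arc_pred s qin; move: (noroot c); rewrite (arc_rel pa Hc).
  by have [c Hc] := arc_pred s qin; move: (noroot c); rewrite (arc_rel pb Hc).
have Aq'q : A q' q.
  have e : rho :: Q = Q1 ++ q' :: [:: q] ++ Q2 by rewrite eQ cat_rcons.
  by have := path_infix pQ e; rewrite /= andbT.
have q'n : q' \notin s :: p1 ++ p2.
  apply/negP => h; move/negP: nQ1; apply; apply/hasP; exists q'; [by rewrite mem_rcons mem_head | exact: h].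
move: qin; rewrite mem_cat => /orP [] qin.
  exact: entry_contra C qin Aq'q q'n.
apply: (entry_contra (cyc_sym C) qin Aq'q).
apply: contra q'n; rewrite !inE !mem_cat => /orP [->|/orP [h|h]] //; by rewrite h ?orbT.
Qed.


Lemma notdom_ex w y : ~ dom w y -> exists2 p, root_path A rho p y & w \notin rho :: p.
Proof.
move=> nd; have [//|H] := pselect (exists2 p, root_path A rho p y & w \notin rho :: p).
exfalso; apply: nd => p rp; apply/negPn/negP => wn; apply: H; by exists p.
Qed.

Lemma labeledP v : {x | phi x = v} + {forall x, phi x != v}.
Proof.
case: (pickP [pred x | phi x == v]) => [x /eqP e|H]; first by left; exists x.
by right => x; move: (H x) => /= ->.
Qed.

Lemma nonstrict_succ s t p1 p2 v v' : ret_cycle A s t p1 p2 ->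
  (v, v') \in zip (s :: p1) p1 -> v != s ->
  exists x, connect A v (phi x) /\ ~~ connect A v' (phi x).
Proof.
move=> C ar vs.
have [pp1 l1 u1] := cyc_side C.
have Avv' := arc_rel pp1 ar.
have vin : v \in p1 by case: (arc_mem ar); rewrite inE (negbTE vs).
have vt : v != t.
  apply/eqP => evt; have v'in : v' \in s :: p1 by case: (arc_mem ar) => _ h; rewrite inE h orbT.
  have [_ c2] := cyc_conn C v'in.
  by move: (acyc Avv'); rewrite evt c2.
case: (labeledP v) => [[x ex]|nl].
  by exists x; rewrite ex connect0; split => //; apply: acyc.
have tv := interior_tree C vin vt.
have [c1 [c2 [A1 A2 n12]]] := two_children nl tv.
have [c [Avc cv']] : exists c, A v c /\ c != v'.
  case: (eqVneq c1 v') => [e1|n1]; last by exists c1.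
  by exists c2; split => //; rewrite -e1 eq_sym.
have [x cx] := leaf_label c.
exists x; split; first exact: connect_trans (connect1 Avc) cx.
apply/negP => v'x.
have [Pv /andP [pPv /eqP lPv]] := rootpath_ex v.
case/connectP: v'x => qa pqa eqa.
case/connectP: cx => qb pqb eqb.
have pR : path A rho (Pv ++ v' :: qa) by rewrite cat_path pPv lPv /= Avv' pqa.
have pQ : path A rho (Pv ++ c :: qb) by rewrite cat_path pPv lPv /= Avc pqb.
have eL : last rho (Pv ++ v' :: qa) = last rho (Pv ++ c :: qb) by rewrite !last_cat /= -eqa -eqb.
have arR : (v, v') \in zip (rho :: Pv ++ v' :: qa) (Pv ++ v' :: qa) by rewrite -{1}lPv arc_at.
have arQ : (v, v') \notin zip (rho :: Pv ++ c :: qb) (Pv ++ c :: qb).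
  apply/negP => H; move/eqP: cv'; apply; apply: (arc_uniq_succ (path_uniq pQ) _ H).
  by rewrite -{1}lPv arc_at.
have [s' [t' [q1 [q2 [C' H1 _ _ [_ _ _ Hs _]]]]]] := extract pR pQ eL arR arQ.
have es' : s' = v by apply: Hs; rewrite -cat_cons mem_cat -lPv mem_last.
have [ess _] := same_cycle C C' ar H1.
by move: vs; rewrite ess es' eqxx.
Qed.

Lemma K w y : connect A w y -> ~ dom w y ->
  exists s t p1 p2, [/\ ret_cycle A s t p1 p2, w \in p1, w != t & connect A t y].
Proof.
move=> wy nd; have [Q /andP [pQ /eqP lQ] wQ] := notdom_ex nd.
have wr : w != rho by apply: contraNneq wQ => ->; rewrite mem_head.
have [Pw /andP [pPw /eqP lPw]] := rootpath_ex w.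
case/connectP: wy => q pq eq.
case/lastP: Pw pPw lPw => [|Pw' w'] pPw lPw; first by move: wr; rewrite -lPw eqxx.
rewrite last_rcons in lPw; rewrite lPw in pPw.
have pR : path A rho (rcons Pw' w ++ q) by rewrite cat_path pPw last_rcons pq.
have arR : (last rho Pw', w) \in zip (rho :: rcons Pw' w ++ q) (rcons Pw' w ++ q).
  by rewrite cat_rcons arc_at.
have arQ : (last rho Pw', w) \notin zip (rho :: Q) Q.
  by apply: contra wQ => /arc_mem [_ h]; rewrite inE h orbT.
have eL : last rho (rcons Pw' w ++ q) = last rho Q by rewrite last_cat last_rcons -eq lQ.
have [s [t [p1 [p2 [C H1 _ tQ [_ _ ty _ _]]]]]] := extract pR pQ eL arR arQ.
exists s, t, p1, p2; split => //.
- by case: (arc_mem H1).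
- by apply: contraNneq wQ => ->.
- by move: ty; rewrite last_cat last_rcons -eq.
Qed.

Lemma Kc s t p1 p2 w y : ret_cycle A s t p1 p2 -> w \in p1 -> w != t -> connect A t y ->
  connect A w y /\ ~ dom w y.
Proof.
move=> C win wt ty.
have winS : w \in s :: p1 by rewrite inE win orbT.
have [_ wt'] := cyc_conn C winS.
split; first exact: connect_trans wt' ty.
have [P0 /andP [pP0 /eqP lP0]] := rootpath_ex s.
have [pp2 l2 u2] := cyc_side (cyc_sym C).
case/connectP: ty => q pq eq.
move=> D; have := D (P0 ++ p2 ++ q).
rewrite /root_path !cat_path pP0 lP0 pp2 !last_cat lP0 l2 pq -eq eqxx => /(_ isT).
rewrite -cat_cons !mem_cat => /orP [wP0|/orP [wp2|wq]].
- have [_ c1] := path_conn pP0 wP0; rewrite lP0 in c1.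
  have [c2 _] := cyc_conn C winS.
  by move: (cyc_s_notin C); rewrite -(antisym c1 c2) win.
- have [_ _ _ Hi] := C; move: (Hi w); rewrite !inE win wp2 !orbT => /(_ isT isT) [ews|ewt].
    by move: (cyc_s_notin C); rewrite -ews win.
  by move: wt; rewrite ewt eqxx.
- have c1 : connect A t w by apply: (path_connect pq); rewrite inE wq orbT.
  by move: wt; rewrite (antisym wt' c1) eqxx.
Qed.

Lemma uniqC s t p1 p2 s' t' q1 q2 w : ~~ is_reticulation A w ->
  ret_cycle A s t p1 p2 -> w \in p1 -> ret_cycle A s' t' q1 q2 -> w \in q1 -> t = t'.
Proof.
move=> tw C win C' win'.
have [a Ha] := arc_pred s win; have [b Hb] := arc_pred s' win'.
have [pp1 _ _] := cyc_side C; have [pq1 _ _] := cyc_side C'.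
have eab := tree_par tw (arc_rel pp1 Ha) (arc_rel pq1 Hb).
rewrite eab in Ha.
by have [_ ->] := same_cycle C C' Ha Hb.
Qed.

Lemma GC s t p1 p2 w y : ~~ is_reticulation A w -> ret_cycle A s t p1 p2 ->
  w \in p1 -> w != t -> (connect A w y /\ ~ dom w y) <-> connect A t y.
Proof.
move=> tw C win wt; split; last by move=> ty; apply: (Kc C win wt ty).
case=> wy nd; have [s' [t' [q1 [q2 [C' win' wt' ty]]]]] := K wy nd.
by rewrite (uniqC tw C win C' win').
Qed.


Lemma dom_on_path a b Q : dom a b -> path A rho Q -> b \in rho :: Q -> a \in rho :: Q.
Proof.
move=> D pQ bin; case/splitPl: bin pQ => Qa Qb lQa.
rewrite cat_path => /andP [pQa _].
have := D Qa; rewrite /root_path pQa lQa eqxx => /(_ isT).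
by rewrite -cat_cons mem_cat => ->.
Qed.

Lemma S_nonempty u : ~~ is_reticulation A u -> exists x, dom u (phi x).
Proof.
move=> tu.
case: (pselect (exists s t p1 p2, [/\ ret_cycle A s t p1 p2, u \in p1 & u != t])) => [[s [t [p1 [p2 [C uin ut]]]]]|NC].
  have [pp1 l1 u1] := cyc_side C.
  have h1 : u \in s :: p1 by rewrite inE uin orbT.
  have h2 : u != last s p1 by rewrite l1.
  have [u' ar] := arc_succ h1 h2.
  have us : u != s by apply: contraNneq (cyc_s_notin C) => <-.
  have [x [ux u'x]] := nonstrict_succ C ar us.
  exists x; case: (pselect (dom u (phi x))) => // nd; exfalso.
  have tx := (GC (phi x) tu C uin ut).1 (conj ux nd).
  have u'in : u' \in s :: p1 by case: (arc_mem ar) => _ h; rewrite inE h orbT.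
  have [_ u't] := cyc_conn C u'in.
  by move: u'x; rewrite (connect_trans u't tx).
have [x ux] := leaf_label u.
exists x; case: (pselect (dom u (phi x))) => // nd; exfalso.
have [s [t [p1 [p2 [C uin ut _]]]]] := K ux nd.
by apply: NC; exists s, t, p1, p2.
Qed.

Lemma PL u w : ~~ is_reticulation A u -> ~~ is_reticulation A w -> connect A w u -> w != u ->
  [\/ (Sset A rho phi u :|: Hset A rho phi u) \subset Hset A rho phi w,
      ((Sset A rho phi u :|: Hset A rho phi u) \subset Sset A rho phi w /\ dom w u) |
      [/\ Sset A rho phi u \proper Sset A rho phi w, Hset A rho phi u = Hset A rho phi w &
          Hset A rho phi w != set0]].
Proof.
move=> tu tw wu nwu.
case: (pselect (dom w u)) => [D|ND]; last first.
  have [s [t [p1 [p2 [C win wt tu']]]]] := K wu ND.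
  apply: Or31; apply/subsetP => x; rewrite in_setU => /orP [/inS Sx|/inH [ux _]].
    by apply/inH; apply/(GC _ tw C win wt); apply: connect_trans tu' (dom_reach Sx).
  by apply/inH; apply/(GC _ tw C win wt); apply: connect_trans tu' ux.
have SS : Sset A rho phi u \subset Sset A rho phi w.
  by apply/subsetP => x /inS Sx; apply/inS; apply: dom_trans D Sx.
case: (boolP (Hset A rho phi u \subset Sset A rho phi w)) => HS.
  by apply: Or32; split => //; rewrite subUset SS HS.
apply: Or33.
case/subsetPn: HS => x /inH [ux ndx] xS.
have ndw : ~ dom w (phi x) by move=> h; move/negP: xS; apply; apply/inS.
have [s [t [p1 [p2 [C uin ut tx]]]]] := K ux ndx.
have [pp1 l1 u1] := cyc_side C.
have [p1a [p1b e1]] := mem_split uin.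
have wa : w \in p1a.
  apply/negPn/negP => wna.
  have Dws : dom w s.
    move=> P0 /andP [pP0 /eqP lP0].
    have := D (P0 ++ rcons p1a u).
    rewrite /root_path cat_path pP0 lP0 last_cat lP0 last_rcons eqxx andbT.
    have -> : path A s (rcons p1a u).
      by move: pp1; rewrite e1 cat_path rcons_path => /andP [-> /= /andP [-> _]].
    move=> /(_ isT); rewrite -cat_cons mem_cat => /orP [//|].
    by rewrite mem_rcons inE (negbTE nwu) (negbTE wna).
  have [Q /andP [pQ /eqP lQ] wQ] := notdom_ex ndw.
  have sQ : s \notin rho :: Q by apply: contra wQ; apply: dom_on_path Dws pQ.
  have [P0 /andP [pP0 /eqP lP0]] := rootpath_ex s.
  case/connectP: tx => q pq eq.
  have pRR : path A rho (P0 ++ p1 ++ q) by rewrite cat_path pP0 lP0 cat_path pp1 l1 pq.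
  have eL : last rho (P0 ++ p1 ++ q) = last rho Q by rewrite !last_cat lP0 l1 -eq lQ.
  have [c [d [Hc _ _]]] := sink_preds C.
  have arR : (c, t) \in zip (rho :: P0 ++ p1 ++ q) (P0 ++ p1 ++ q).
    apply: (arc_infix (l1 := belast rho P0) (l2 := q) (a := s) (q := p1)) => //.
    have e0 : rho :: P0 = rcons (belast rho P0) s by rewrite lastI lP0.
    by transitivity ((rho :: P0) ++ p1 ++ q) => //; rewrite e0 cat_rcons.
  have arQ : (c, t) \notin zip (rho :: Q) Q.
    apply/negP => /arc_mem [cQ _]; apply: (negP sQ).
    case: (arc_mem Hc); rewrite inE => /orP [/eqP ecs|cp1] _; first by rewrite -ecs.
    exact: dom_on_path (src_dom C cp1) pQ cQ.
  have [s' [t' [q1 [q2 [C' H1 s'Q _ _]]]]] := extract pRR pQ eL arR arQ.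
  have [ess _] := same_cycle C C' Hc H1.
  by move: sQ; rewrite ess s'Q.
have win : w \in p1 by rewrite e1 mem_cat wa.
have wt : w != t.
  apply/eqP => ewt; move: u1; rewrite e1 /= cat_uniq => /andP [_ /and3P [_ /hasPn H _]].
  have wl : w \in u :: p1b by rewrite ewt -l1 e1 last_cat /= mem_last.
  by move: (H w wl); rewrite wa.
have HH : Hset A rho phi u = Hset A rho phi w.
  apply/setP => y; apply/idP/idP => /inH h; apply/inH.
    by apply/(GC _ tw C win wt); apply/(GC _ tu C uin ut).
  by apply/(GC _ tu C uin ut); apply/(GC _ tw C win wt).
split => //; last first.
  by apply/set0Pn; exists x; rewrite -HH; apply/inH.
apply/properP; split => //.
have pa : path A s (p1a ++ [:: u]).
  by move: pp1; rewrite e1 cat_path cats1 rcons_path => /andP [-> /= /andP [-> _]].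
have h1 : w \in s :: p1a ++ [:: u] by rewrite inE mem_cat wa orbT.
have h2 : w != last s (p1a ++ [:: u]) by rewrite last_cat.
have [w' arw] := arc_succ h1 h2.
have arw1 : (w, w') \in zip (s :: p1) p1.
  by apply: (arc_infix (l1 := [::]) (l2 := p1b) (a := s) (q := p1a ++ [:: u])) => //; rewrite e1 -catA.
have ws : w != s by apply: contraNneq (cyc_s_notin C) => <-.
have [y [wy w'y]] := nonstrict_succ C arw1 ws.
have w'u : connect A w' u.
  have w'in : w' \in s :: p1a ++ [:: u] by case: (arc_mem arw) => _ h; rewrite inE h orbT.
  by have [_] := path_conn pa w'in; rewrite last_cat.
have uinS : u \in s :: p1 by rewrite inE uin orbT.
have [_ ut'] := cyc_conn C uinS.
exists y.
  apply/inS; case: (pselect (dom w (phi y))) => // nd; exfalso.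
  have ty := (GC (phi y) tw C win wt).1 (conj wy nd).
  by move: w'y; rewrite (connect_trans (connect_trans w'u ut') ty).
apply/negP => /inS /dom_reach uy.
by move: w'y; rewrite (connect_trans w'u uy).
Qed.


Notation SS u := (Sset A rho phi u).
Notation HH u := (Hset A rho phi u).

Lemma SiP a i : a \in Si A rho phi r i -> exists2 u, u \in Vi A r i &
  (a = (SS u, HH u) \/ (a = (HH u, set0) /\ HH u != set0)).
Proof.
rewrite /Si in_setU => /orP [/imsetP [u uin ->]|/imsetP [u]]; first by exists u => //; left.
by rewrite inE => /andP [uin ne] ->; exists u => //; right.
Qed.

Lemma Si_S u i : u \in Vi A r i -> (SS u, HH u) \in Si A rho phi r i.
Proof. by move=> uin; rewrite /Si in_setU; apply/orP; left; apply/imsetP; exists u. Qed.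

Lemma Si_H u i : u \in Vi A r i -> HH u != set0 -> (HH u, set0) \in Si A rho phi r i.
Proof.
move=> uin ne; rewrite /Si in_setU; apply/orP; right; apply/imsetP; exists u => //.
by rewrite inE uin ne.
Qed.

Lemma SH_disj x u : x \in SS u -> x \in HH u -> False.
Proof. by move=> /inS h /inH [_ h']. Qed.

Lemma sp_le_refl (a : {set X} * {set X}) : sp_le a a.
Proof. by case: a => S1 H1; rewrite /sp_le eqxx. Qed.

Lemma S_root : SS rho = setT.
Proof. apply/setP => x; rewrite in_setT; apply/(inS x rho); apply: dom_root. Qed.

Lemma H_root : HH rho = set0.
Proof. apply/setP => x; rewrite in_set0; apply/negP => /(inH x rho) [_ []]; apply: dom_root. Qed.

Lemma top : Si A rho phi r (sigma r) = [set (setT, set0)].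
Proof.
rewrite /Si Vi_sigma imset_set1 S_root H_root.
have -> : [set u in [set rho] | HH u != set0] = set0.
  by apply/setP => v; rewrite !inE; case: (eqVneq v rho) => // ->; rewrite H_root eqxx.
by rewrite imset0 setU0.
Qed.

Lemma HH_cycle s t p1 p2 w : ~~ is_reticulation A w -> ret_cycle A s t p1 p2 ->
  w \in p1 -> w != t -> forall x, (x \in HH w) = connect A t (phi x).
Proof.
move=> tw C win wt x; apply/idP/idP => [h|h]; [move: h => /(inH x w) h | apply/(inH x w)].
  exact/(GC _ tw C win wt).
exact/(GC _ tw C win wt).
Qed.

Lemma sp1 i j a : i < j -> j <= sigma r -> a \in Si A rho phi r i ->
  exists2 b, b \in Si A rho phi r j & sp_le a b.
Proof.
move=> ij js /SiP [u uin Ha].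
have ru : r u <= i by move: uin; rewrite inVi => /andP [].
have [w win wu] := Vi_above (leq_trans ru (ltnW ij)).
case: (eqVneq w u) => [ewu|nwu].
  rewrite ewu in win; exists a; last exact: sp_le_refl.
  by case: Ha => [->|[-> ne]]; [apply: Si_S | apply: Si_H].
exists (SS w, HH w); first exact: Si_S.
have tu := Vi_tree uin; have tw := Vi_tree win.
case: Ha => [->|[-> ne]]; rewrite /sp_le /=; apply/or4P; case: (PL tu tw wu nwu) => [h|[h _]|[h1 h2 h3]].
- by apply: Or43.
- by apply: Or42.
- by apply: Or44; rewrite h1 h2 eqxx h3.
- by apply: Or43; rewrite setU0; move: h; rewrite subUset => /andP [].
- by apply: Or42; rewrite setU0; move: h; rewrite subUset => /andP [].
- by apply: Or43; rewrite setU0 h2 subxx.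
Qed.

Lemma sp2 i j b : i < j -> j <= sigma r -> b \in Si A rho phi r j -> b.2 != set0 ->
  (exists2 a, a \in Si A rho phi r i & a.2 = b.2) ->
  exists2 a, a \in Si A rho phi r i & a.2 = b.2 /\ sp_le a b.
Proof.
move=> ij js /SiP [w win [->|[-> _]]] /= bne; last by rewrite eqxx in bne.
case=> a /SiP [u uin [->|[-> _]]] /= ea; last by rewrite -ea eqxx in bne.
case: (boolP (w \in Vi A r i)) => wi.
  by exists (SS w, HH w); [apply: Si_S | split => //; apply: sp_le_refl].
have riw : i < r w.
  move: wi win; rewrite !inVi negb_and -ltnNge => /orP [//|/forallPn [p]].
  rewrite negb_imply -ltnNge => /andP [Apw pi] /andP [_ /forallP /(_ p)].
  by rewrite Apw /= ltnS in pi * => jp; move: (leq_trans (ltn_trans ij jp) pi); rewrite ltnn.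
have tw := Vi_tree win; have tu := Vi_tree uin.
case/set0Pn: (bne) => x /inH [wx ndx].
have [s [t [p1 [p2 [C w1 wt tx]]]]] := K wx ndx.
have Hwt := HH_cycle tw C w1 wt.
have rt : r t <= i.
  rewrite leqNgt; apply/negP => it.
  case/connectP: tx => pt ppt ept.
  have [v vin vi] : exists2 v, v \in pt & v \in Vi A r i.
    by apply: (Vi_on_path ppt); rewrite -ept r_lab it.
  have tv : connect A t v by apply: (path_connect ppt); rewrite inE vin orbT.
  have [y dy] := S_nonempty (Vi_tree vi).
  have yHu : y \in HH u by rewrite ea Hwt (connect_trans tv (dom_reach dy)).
  have [uy _] := (inH y u).1 yHu.
  have [Pu /andP [pPu /eqP lPu]] := rootpath_ex u.
  case/connectP: uy => q pq eq.
  have := dy (Pu ++ q); rewrite /root_path cat_path pPu lPu pq last_cat lPu -eq eqxx => /(_ isT).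
  rewrite -cat_cons mem_cat => /orP [vPu|vq].
    have [_ c] := path_conn pPu vPu; rewrite lPu in c.
    have evu := Vi_reach vi uin c.
    have [z dz] := S_nonempty tu.
    have : z \in HH u by rewrite ea Hwt; rewrite evu in tv; exact: (connect_trans tv (dom_reach dz)).
    by move/inH => [_].
  have c : connect A u v by apply: (path_connect pq); rewrite inE vq orbT.
  have evu := Vi_reach uin vi c.
  have [z dz] := S_nonempty tu.
  have : z \in HH u by rewrite ea Hwt; rewrite -evu in tv; exact: (connect_trans tv (dom_reach dz)).
  by move/inH => [_].
have [pp1 l1 u1] := cyc_side C.
have [p1a [p1b e1]] := mem_split w1.
have pb : path A w p1b by apply: (path_infix (l1 := s :: p1a) (l2 := [::]) pp1); rewrite e1 cats0.
have lb : last w p1b = t by rewrite -l1 e1 last_cat.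
have [v vin vi] : exists2 v, v \in p1b & v \in Vi A r i.
  by apply: (Vi_on_path pb); rewrite lb rt riw.
have tv := Vi_tree vi.
have v1 : v \in p1 by rewrite e1 mem_cat inE vin !orbT.
have vt : v != t by apply/eqP => evt; move: tv; rewrite evt (sink_retic C).
have wv : connect A w v by apply: (path_connect pb); rewrite inE vin orbT.
have nwv : w != v.
  apply/eqP => ewv; move: u1; rewrite e1 /= cat_uniq => /andP [_] /and3P [_ _ /andP [wn _]].
  by move: wn; rewrite ewv vin.
have Hvt := HH_cycle tv C v1 vt.
exists (SS v, HH v); first exact: Si_S.
have ehv : HH v = HH w by apply/setP => y; rewrite Hvt Hwt.
split; first by rewrite /= ehv.
rewrite /sp_le /=; apply/or4P; case: (PL tv tw wv nwv) => [h|[h _]|[h1 h2 h3]].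
- by apply: Or43.
- by apply: Or42.
- by apply: Or44; rewrite h1 h2 eqxx h3.
Qed.


Lemma strict_lt i j : i < j -> j <= sigma r -> Si A rho phi r i <> Si A rho phi r j.
Proof.
move=> ij js E.
have [w win rw] := Vi_rank js.
have tw := Vi_tree win.
have [x0 dx0] := S_nonempty tw.
have : (SS w, HH w) \in Si A rho phi r i by rewrite E; apply: Si_S.
case/SiP => u uin Hu.
have ru : r u <= i by move: uin; rewrite inVi => /andP [].
have tu := Vi_tree uin.
have rwu : r u < r w by rewrite rw; apply: leq_ltn_trans ru ij.
have nuw : ~ connect A u w by move/r_reach; rewrite leqNgt rwu.
case: Hu => [[eS eH]|[[eS eH] hne]].
  have x0u : dom u (phi x0) by apply/inS; rewrite -eS; apply/inS.
  have wu : connect A w u by case: (dom_cmp dx0 x0u).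
  have nwu : w != u by apply: contraTneq rwu => ->; rewrite ltnn.
  case: (PL tu tw wu nwu) => [h|[h D]|[h1 _ _]].
  - have : x0 \in HH w by apply: (subsetP h); rewrite in_setU -eS; apply/orP; left; apply/inS.
    by apply: SH_disj; apply/inS.
  - have below : forall y, connect A w (phi y) -> dom u (phi y).
      move=> y wy; case: (pselect (dom w (phi y))) => [d|nd].
        by apply/inS; rewrite -eS; apply/inS.
      have yH : y \in HH u by rewrite -eH; apply/inH.
      by exfalso; apply: nd; apply/inS; apply: (subsetP h); rewrite in_setU yH orbT.
    have nl : forall x, phi x != w.
      move=> x; apply/eqP => ex; move: rwu; rewrite -ex r_lab.
      by [].
    have [c1 [c2 [A1 A2 n12]]] := two_children nl tw.
    have [Pw /andP [pPw /eqP lPw]] := rootpath_ex w.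
    have cu : forall c, A w c -> connect A c u.
      move=> c Awc; have [yy cy] := leaf_label c.
      have du := below yy (connect_trans (connect1 Awc) cy).
      case/connectP: cy => q pq eq.
      have := du (Pw ++ c :: q); rewrite /root_path cat_path pPw lPw /= Awc pq last_cat lPw /= -eq eqxx.
      move=> /(_ isT); rewrite -cat_cons mem_cat => /orP [uPw|uq].
        by have [_ c'] := path_conn pPw uPw; rewrite lPw in c'.
      by have [] := path_conn pq uq.
    case/connectP: (cu _ A1) => qa pqa eqa.
    case/connectP: (cu _ A2) => qb pqb eqb.
    have pR : path A rho (Pw ++ c1 :: qa) by rewrite cat_path pPw lPw /= A1 pqa.
    have pQ : path A rho (Pw ++ c2 :: qb) by rewrite cat_path pPw lPw /= A2 pqb.
    have eL : last rho (Pw ++ c1 :: qa) = last rho (Pw ++ c2 :: qb) by rewrite !last_cat /= -eqa -eqb.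
    have arR : (w, c1) \in zip (rho :: Pw ++ c1 :: qa) (Pw ++ c1 :: qa) by rewrite -{1}lPw arc_at.
    have arQ : (w, c1) \notin zip (rho :: Pw ++ c2 :: qb) (Pw ++ c2 :: qb).
      apply/negP => H; move/eqP: n12; apply; apply: (arc_uniq_succ (path_uniq pQ) H).
      by rewrite -{1}lPw arc_at.
    have [s' [t' [q1 [q2 [C' H1 _ _ [_ _ ty Hs _]]]]]] := extract pR pQ eL arR arQ.
    have es' : s' = w by apply: Hs; rewrite -cat_cons mem_cat -lPw mem_last.
    rewrite es' in C' H1.
    have [pq1 lq1 uq1] := cyc_side C'.
    have c1in : c1 \in q1 by case: (arc_mem H1).
    have tu' : connect A t' u by move: ty; rewrite last_cat /= -eqa.
    case: (eqVneq c1 t') => [ect|nct].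
      rewrite ect in H1; have eq1 := side_head uq1 H1 lq1.
      by rewrite eq1 in C'; apply: (no_short C').
    have h1 : c1 \in w :: q1 by rewrite inE c1in orbT.
    have h2 : c1 != last w q1 by rewrite lq1.
    have [c1' ar] := arc_succ h1 h2.
    have c1w : c1 != w by apply: contraNneq (cyc_s_notin C') => <-.
    have [z [cz c'z]] := nonstrict_succ C' ar c1w.
    have c1'in : c1' \in w :: q1 by case: (arc_mem ar) => _ hh; rewrite inE hh orbT.
    have [_ c't] := cyc_conn C' c1'in.
    have uz := dom_reach (below z (connect_trans (connect1 A1) cz)).
    by move: c'z; rewrite (connect_trans (connect_trans c't tu') uz).
  - by move: h1; rewrite eS properE subxx andbF.
have x0H : x0 \in HH u by rewrite -eS; apply/inS.
case/(inH x0 u): x0H => ux0 nd.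
have [s [t [p1 [p2 [C uin1 ut tx]]]]] := K ux0 nd.
have uinS : u \in s :: p1 by rewrite inE uin1 orbT.
have [su uT] := cyc_conn C uinS.
have rtw : r t < r w by apply: leq_ltn_trans (r_reach uT) rwu.
have ntw : ~ connect A t w by move/r_reach; rewrite leqNgt rtw.
have dwt := dom_via dx0 tx ntw.
have dws : dom w s.
  move=> P0 /andP [pP0 /eqP lP0].
  have [pp1 l1 _] := cyc_side C; have [pp2 l2 _] := cyc_side (cyc_sym C).
  have r1 : root_path A rho (P0 ++ p1) t by rewrite /root_path cat_path pP0 lP0 pp1 last_cat lP0 l1 eqxx.
  have r2 : root_path A rho (P0 ++ p2) t by rewrite /root_path cat_path pP0 lP0 pp2 last_cat lP0 l2 eqxx.
  move: (dwt _ r1) (dwt _ r2); rewrite -!cat_cons !mem_cat => /orP [//|w1] /orP [//|w2].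
  have [_ _ _ Hi] := C; case: (Hi w); rewrite ?inE ?w1 ?w2 ?orbT // => ew.
    by move: (cyc_s_notin C); rewrite -ew w1.
  by move: rtw; rewrite ew ltnn.
have wu := connect_trans (dom_reach dws) su.
have [z dz] := S_nonempty tu.
have wz := connect_trans wu (dom_reach dz).
case: (pselect (dom w (phi z))) => [d|nd'].
  have : z \in HH u by rewrite -eS; apply/inS.
  by case/(inH z u) => _.
have : z \in HH w by apply/(inH z w).
by rewrite eH in_set0.
Qed.

End G.

Theorem mainTheorem4 (X V : finType) (A : rel V) (rho : V) (phi : X -> V)
    (r : V -> nat) :
  0 < #|X| ->
  ranked_cactus A rho phi r ->
  (forall i j, i < j <= sigma r ->
     sps_lt (Si A rho phi r i) (Si A rho phi r j)) /\
  Si A rho phi r (sigma r) = [set (setT, set0)].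
Proof.
move=> _ [Hcac Hrk]; split; last exact: top Hcac Hrk.
move=> i j /andP [ij js]; split; last by move: (strict_lt Hcac Hrk ij js).
split.
- by move=> a ain; move: (sp1 Hcac Hrk ij js ain).
- by move=> b bin bne ex; move: (sp2 Hcac Hrk ij js bin bne ex).
Qed.
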